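(* Let $T$ be a finitary monad on $\mathbf{Set}$. Then the locales $\mathrm{LB}_0T$ and $\mathrm{LB}_1T$ are spatial.
   Context: A monad $T$ on $\mathbf{Set}$: sets $TA$, $\mathrm{return}\,a\in TA$, $\mathbin{\gg\!=}\colon TA\times(TB)^A\to TB$ with the monad laws; $t\gg s:=t\mathbin{\gg\!=}\lambda a.s$. $T$ is finitary if every $t\in TA$ is $t'\mathbin{\gg\!=}\lambda i.\mathrm{return}\,f(i)$ for some finite $I$, $t'\in TI$, $f\colon I\to A$; in particular $T$ has rank $\kappa=\omega$. $1=\{*\}$, $2=\{0,1\}$. $\mathrm{LB}_0T$: frame presented by generators $[b]$ ($b\in T2$) subject to $[t\mapsto a]\wedge[t\mapsto a']=\bot$ ($a\ne a'$), $[t\gg\mathrm{return}\,a\mapsto a]=\top$, $[t\mathbin{\gg\!=}u\mapsto b]=\bigvee_a[t\mapsto a]\wedge[t\gg u(a)\mapsto b]$ for all sets $A,B$, $t\in TA$, $u\colon A\to TB$, $b\in B$, with $[t\mapsto a]:=[t\mathbin{\gg\!=}\lambda a'.\mathrm{return}(\delta_a(a'))]$, $\delta_a(a')=1$ iff $a'=a$. Trace equivalence: $[\![m\sim_1m']\!]=\bigvee\{[t\mapsto a]: |A|\le\kappa, t\in TA, u,u'\colon A\to T1, u(a)=u'(a), m=t\mathbin{\gg\!=}u, m'=t\mathbin{\gg\!=}u'\}$; $[\![m\sim m']\!]$ is the join over $k\ge1$ and $m=m_1,\ldots,m_k=m'$ of $\bigwedge_{i<k}[\![m_i\sim_1m_{i+1}]\!]$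 (with $[\![m\sim_1 m']\!]$ itself for $k=1$); for complemented $b$, $m\sim_bm'$ iff $b\le[\![m\sim m']\!]$. $\mathrm{LB}_1T$ has frame the pointwise-ordered set of functions $w\colon T1\to\mathcal{O}(\mathrm{LB}_0T)$ with $b\wedge w(m_1)=b\wedge w(m_2)$ whenever $b$ complemented and $m_1\sim_bm_2$. A locale $L$ is spatial if the map $u\mapsto\{x\in\mathrm{pt}(L): x^{-1}(u)=\top\}$ from $\mathcal{O}(L)$ to the opens of its space of points is injective (equivalently an isomorphism), where points are frame maps $\mathcal{O}(L)\to\{\bot,\top\}$. *)

(* Defs.v *)
From Stdlib Require Import List ClassicalDescription FunctionalExtensionality ProofIrrelevance.
Set Implicit Arguments.

Record monad := Monad {
  mT :> Type -> Type;
  ret : forall A, A -> mT A;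
  bind : forall A B, mT A -> (A -> mT B) -> mT B;
  bind_ret_l : forall A B (a : A) (f : A -> mT B), bind (ret a) f = f a;
  bind_ret_r : forall A (t : mT A), bind t (@ret A) = t;
  bind_assoc : forall A B C (t : mT A) (f : A -> mT B) (g : B -> mT C),
      bind (bind t f) g = bind t (fun a => bind (f a) g)
}.
Arguments ret {m A}.
Arguments bind {m A B}.

Definition seqm (T : monad) A B (t : T A) (s : T B) : T B := bind t (fun _ => s).
Arguments seqm {T A B}.

(** finitary: every t is t' >>= (return o f) for some finite I (here I = {0,..,n-1}) *)
Definition finitary (T : monad) : Prop :=
  forall (A : Type) (t : T A), exists (n : nat) (t' : T {i : nat | i < n})
    (f : {i : nat | i < n} -> A), t = bind t' (fun i => ret (f i)).

Record frame := Frame {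
  fcar :> Type;
  fle : fcar -> fcar -> Prop;
  fmeet : fcar -> fcar -> fcar;
  ftop : fcar;
  fsup : (fcar -> Prop) -> fcar;
  fle_refl : forall x, fle x x;
  fle_trans : forall x y z, fle x y -> fle y z -> fle x z;
  fle_antisym : forall x y, fle x y -> fle y x -> x = y;
  fmeet_spec : forall x a b, fle x (fmeet a b) <-> (fle x a /\ fle x b);
  ftop_spec : forall x, fle x ftop;
  fsup_spec : forall (S : fcar -> Prop) x, fle (fsup S) x <-> (forall s, S s -> fle s x);
  fdistr : forall a (S : fcar -> Prop),
      fle (fmeet a (fsup S)) (fsup (fun y => exists s, S s /\ y = fmeet a s))
}.
Arguments fle {f}. Arguments fmeet {f}. Arguments ftop {f}. Arguments fsup {f}.

Definition fbot (L : frame) : L := fsup (fun _ => False).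
Definition fjoin (L : frame) (a b : L) : L := fsup (fun x => x = a \/ x = b).
Arguments fjoin {L}.
Definition complemented (L : frame) (b : L) : Prop :=
  exists c, fmeet b c = fbot L /\ fjoin b c = ftop.

Arguments complemented {L}.
Definition frame_hom (L M : frame) (phi : L -> M) : Prop :=
  phi ftop = ftop /\ (forall a b, phi (fmeet a b) = fmeet (phi a) (phi b)) /\
  (forall S : L -> Prop, phi (fsup S) = fsup (fun y => exists x, S x /\ y = phi x)).
Arguments frame_hom {L M}.

(** points: frame maps into the two-element frame {bot, top} (= bool) *)
Definition is_point (L : frame) (p : L -> bool) : Prop :=
  p ftop = true /\ (forall a b, p (fmeet a b) = andb (p a) (p b)) /\
  (forall S : L -> Prop, p (fsup S) = true <-> exists s, S s /\ p s = true).

Arguments is_point {L}.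
Definition spatial (L : frame) : Prop :=
  forall u v : L, (forall p : L -> bool, is_point p -> (p u = true <-> p v = true)) -> u = v.

Definition delta (A : Type) (a a' : A) : bool :=
  if excluded_middle_informative (a' = a) then true else false.

Definition mapsto (T : monad) A (t : T A) (a : A) : T bool :=
  bind t (fun a' => ret (delta a a')).
Arguments mapsto {T A}.

Definition LB0_relations (T : monad) (L : frame) (h : T bool -> L) : Prop :=
  (forall (A : Type) (t : T A) (a a' : A), a <> a' ->
      fmeet (h (mapsto t a)) (h (mapsto t a')) = fbot L) /\
  (forall (A B : Type) (t : T A) (a : B), h (mapsto (seqm t (ret a)) a) = ftop) /\
  (forall (A B : Type) (t : T A) (u : A -> T B) (b : B),
      h (mapsto (bind t u) b) =
      fsup (fun x => exists a : A, x = fmeet (h (mapsto t a)) (h (mapsto (seqm t (u a)) b)))).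
Arguments LB0_relations {T L}.

(** (F, g) is the frame presented by generators [b] (b : T 2) and the relations above *)
Definition is_LB0 (T : monad) (F : frame) (g : T bool -> F) : Prop :=
  LB0_relations g /\
  forall (L : frame) (h : T bool -> L), LB0_relations h ->
    exists phi : F -> L, frame_hom phi /\ (forall b, phi (g b) = h b) /\
      forall psi : F -> L, frame_hom psi -> (forall b, psi (g b) = h b) ->
        forall x, psi x = phi x.
Arguments is_LB0 {T F}.

(** * Trace equivalence (kappa = omega: |A| <= omega means A injects into nat) *)
Definition sim1 (T : monad) (F : frame) (g : T bool -> F) (m m' : T unit) : F :=
  fsup (fun x => exists (A : Type) (enc : A -> nat),
          (forall a1 a2, enc a1 = enc a2 -> a1 = a2) /\
          exists (t : T A) (u u' : A -> T unit) (a : A),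
            u a = u' a /\ m = bind t u /\ m' = bind t u' /\ x = g (mapsto t a)).
Arguments sim1 {T F}.

Fixpoint chain_meet {T : monad} {F : frame} (g : T bool -> F) (x : T unit) (l : list (T unit)) : F :=
  match l with
  | nil => ftop
  | y :: l' => fmeet (sim1 g x y) (chain_meet g y l')
  end.

Fixpoint lastl {A : Type} (x : A) (l : list A) : A :=
  match l with nil => x | y :: l' => lastl y l' end.

(** chains m = m_1, ..., m_k = m' with k >= 1: the chain is m :: l with k = 1 + length l;
    for k = 1 the term is [[m ~1 m']] itself *)
Definition chain_val (T : monad) (F : frame) (g : T bool -> F) (m m' : T unit) (l : list (T unit)) : F :=
  match l with nil => sim1 g m m' | _ => chain_meet g m l end.
Arguments chain_val {T F}.

Definition sim (T : monad) (F : frame) (g : T bool -> F) (m m' : T unit) : F :=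
  fsup (fun x => exists l : list (T unit), lastl m l = m' /\ x = chain_val g m m' l).
Arguments sim {T F}.

Definition sim_b (T : monad) (F : frame) (g : T bool -> F) (b : F) (m m' : T unit) : Prop :=
  fle b (sim g m m').
Arguments sim_b {T F}.

Section LB1.
Variables (T : monad) (F : frame) (g : T bool -> F).

Definition LB1_ok (w : T unit -> F) : Prop :=
  forall b : F, complemented b -> forall m1 m2, sim_b g b m1 m2 ->
    fmeet b (w m1) = fmeet b (w m2).

Definition LB1car := {w : T unit -> F | LB1_ok w}.

Lemma fle_meetl (a b : F) : fle (fmeet a b) a.
Proof. apply (proj1 (fmeet_spec _ _ _ _) (fle_refl _ _)). Qed.
Lemma fle_meetr (a b : F) : fle (fmeet a b) b.
Proof. apply (proj1 (fmeet_spec _ _ _ _) (fle_refl _ _)). Qed.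

Lemma meet_distr_meet (b x y : F) : fmeet b (fmeet x y) = fmeet (fmeet b x) (fmeet b y).
Proof.
  apply fle_antisym.
  - apply fmeet_spec; split; apply fmeet_spec; split; try apply fle_meetl.
    + eapply fle_trans; [apply fle_meetr|apply fle_meetl].
    + eapply fle_trans; [apply fle_meetr|apply fle_meetr].
  - apply fmeet_spec; split.
    + eapply fle_trans; [apply fle_meetl|apply fle_meetl].
    + apply fmeet_spec; split.
      * eapply fle_trans; [apply fle_meetl|apply fle_meetr].
      * eapply fle_trans; [apply fle_meetr|apply fle_meetr].
Qed.

Lemma meet_sup (a : F) (S : F -> Prop) :
  fmeet a (fsup S) = fsup (fun y => exists s, S s /\ y = fmeet a s).
Proof.
  apply fle_antisym; [apply fdistr|].
  apply fsup_spec; intros y [s [Hs ->]]; apply fmeet_spec; split; [apply fle_meetl|].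
  eapply fle_trans; [apply fle_meetr|]. apply (proj1 (fsup_spec _ _ _) (fle_refl _ _)); exact Hs.
Qed.

Lemma sup_ext (S S' : F -> Prop) : (forall x, S x <-> S' x) -> fsup S = fsup S'.
Proof.
  intros H; apply fle_antisym; apply fsup_spec; intros s Hs;
  apply (proj1 (fsup_spec _ _ _) (fle_refl _ _)); apply H; exact Hs.
Qed.

Definition LB1le (w w' : LB1car) : Prop := forall m, fle (proj1_sig w m) (proj1_sig w' m).

Lemma LB1_meet_ok (w w' : LB1car) : LB1_ok (fun m => fmeet (proj1_sig w m) (proj1_sig w' m)).
Proof.
  destruct w as [w Hw], w' as [w' Hw']; intros b Hb m1 m2 H; simpl.
  rewrite (meet_distr_meet b (w m1)), (meet_distr_meet b (w m2)), (Hw b Hb m1 m2 H), (Hw' b Hb m1 m2 H); reflexivity.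
Qed.
Definition LB1meet (w w' : LB1car) : LB1car := exist _ _ (LB1_meet_ok w w').

Lemma LB1_top_ok : LB1_ok (fun _ => ftop).
Proof. intros b _ m1 m2 _; reflexivity. Qed.
Definition LB1top : LB1car := exist _ _ LB1_top_ok.

Lemma LB1_sup_ok (S : LB1car -> Prop) :
  LB1_ok (fun m => fsup (fun y => exists w, S w /\ y = proj1_sig w m)).
Proof.
  intros b Hb m1 m2 H; simpl; rewrite !meet_sup; apply sup_ext; intros x; split;
  intros [s [[w [Hw ->]] ->]]; destruct w as [w Hok]; simpl.
  - exists (w m2); split; [exists (exist _ w Hok); auto|]. apply Hok; auto.
  - exists (w m1); split; [exists (exist _ w Hok); auto|]. symmetry; apply Hok; auto.
Qed.
Definition LB1sup (S : LB1car -> Prop) : LB1car := exist _ _ (LB1_sup_ok S).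

Lemma LB1_eq (w w' : LB1car) : (forall m, proj1_sig w m = proj1_sig w' m) -> w = w'.
Proof.
  destruct w as [w Hw], w' as [w' Hw']; simpl; intros H.
  assert (w = w') by (apply functional_extensionality; exact H); subst.
  f_equal; apply proof_irrelevance.
Qed.

Definition LB1 : frame.
Proof.
  refine (@Frame LB1car LB1le LB1meet LB1top LB1sup _ _ _ _ _ _ _).
  - intros x m; apply fle_refl.
  - intros x y z H1 H2 m; eapply fle_trans; eauto.
  - intros x y H1 H2; apply LB1_eq; intros m; apply fle_antisym; auto.
  - intros x a b; unfold LB1le; simpl; split.
    + intros H; split; intros m; apply (proj1 (fmeet_spec _ _ _ _) (H m)).
    + intros [H1 H2] m; apply fmeet_spec; auto.
  - intros x m; apply ftop_spec.
  - intros S x; unfold LB1le; simpl; split.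
    + intros H s Hs m; eapply fle_trans; [|apply H].
      apply (proj1 (fsup_spec _ _ _) (fle_refl _ _)); exists s; auto.
    + intros H m; apply fsup_spec; intros y [w [Hw ->]]; apply H; auto.
  - intros a S m; simpl; rewrite meet_sup; apply fsup_spec; intros y [s [[w [Hw ->]] ->]].
    apply (proj1 (fsup_spec _ _ _) (fle_refl _ _)).
    exists (LB1meet a w); split; [exists w; auto|]. reflexivity.
Defined.
End LB1.
Arguments LB1 {T F}.

(* Main.v *)
Require Import Defs.
From Stdlib Require Import Classical ClassicalDescription ProofIrrelevance FunctionalExtensionality Arith List Lia.
Open Scope list_scope.
Module ZornW.
From mathcomp Require Import classical_sets.
Lemma my_zorn (T : Type) (P : (T -> Prop) -> Prop) :
  (forall C : (T -> Prop) -> Prop, (forall X, C X -> P X) ->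
     (forall X Y, C X -> C Y -> (forall x, X x -> Y x) \/ (forall x, Y x -> X x)) ->
     P (fun x => exists2 X, C X & X x)) ->
  exists A, P A /\ forall B, (forall x, A x -> B x) -> P B -> forall x, B x -> A x.
Proof.
  intros H. destruct (@Zorn_bigcup T P) as [A [PA HA]].
  - intros F FP Ftot. apply H; [exact FP| exact Ftot].
  - exists A; split; [exact PA|]. intros B AB PB x Bx.
    apply Classical_Prop.NNPP; intros nAx. apply (HA B); [|exact PB].
    split; [exact AB|]. intros BA; apply nAx, BA, Bx.
Qed.
End ZornW.
Set Implicit Arguments. Unset Strict Implicit.

Section FL.
Variable L : frame.
Implicit Types a b x y z : L.

Lemma le_sup (S : L -> Prop) s : S s -> fle s (fsup S).
Proof. intros H. exact (proj1 (fsup_spec L S (fsup S)) (fle_refl _ _) s H). Qed.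
Lemma sup_le (S : L -> Prop) x : (forall s, S s -> fle s x) -> fle (fsup S) x.
Proof. intros H; apply fsup_spec; exact H. Qed.
Lemma ml a b : fle (fmeet a b) a.
Proof. apply (proj1 (fmeet_spec _ _ _ _) (fle_refl _ _)). Qed.
Lemma mr a b : fle (fmeet a b) b.
Proof. apply (proj1 (fmeet_spec _ _ _ _) (fle_refl _ _)). Qed.
Lemma le_meet x a b : fle x a -> fle x b -> fle x (fmeet a b).
Proof. intros; apply fmeet_spec; auto. Qed.
Lemma lt' x y z : fle x y -> fle y z -> fle x z.
Proof. apply fle_trans. Qed.
Lemma meet_mono a b c d : fle a c -> fle b d -> fle (fmeet a b) (fmeet c d).
Proof. intros; apply le_meet; [eapply lt'; [apply ml|]|eapply lt'; [apply mr|]]; auto. Qed.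
Lemma meet_comm a b : fmeet a b = fmeet b a.
Proof. apply fle_antisym; apply le_meet; (apply ml || apply mr). Qed.
Lemma meet_assoc a b c : fmeet (fmeet a b) c = fmeet a (fmeet b c).
Proof.
  apply fle_antisym; repeat apply le_meet.
  - eapply lt'; apply ml.
  - eapply lt'; [apply ml|apply mr].
  - apply mr.
  - apply ml.
  - eapply lt'; [apply mr|apply ml].
  - eapply lt'; apply mr.
Qed.
Lemma meet_top a : fmeet ftop a = a.
Proof. apply fle_antisym; [apply mr|apply le_meet; [apply ftop_spec|apply fle_refl]]. Qed.
Lemma le_meet_eq a b : fle a b -> fmeet a b = a.
Proof. intros; apply fle_antisym; [apply ml|apply le_meet; auto; apply fle_refl]. Qed.
Lemma sup_ext' (S S' : L -> Prop) : (forall x, S x <-> S' x) -> fsup S = fsup S'.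
Proof.
  intros H; apply fle_antisym; apply sup_le; intros s Hs; apply le_sup; apply H; exact Hs.
Qed.
Lemma meet_sup' a (S : L -> Prop) :
  fmeet a (fsup S) = fsup (fun y => exists s, S s /\ y = fmeet a s).
Proof.
  apply fle_antisym; [apply fdistr|].
  apply sup_le; intros y [s [Hs ->]]; apply meet_mono; [apply fle_refl|apply le_sup; auto].
Qed.
Lemma bot_le x : fle (fbot L) x.
Proof. apply sup_le; intros s []. Qed.
End FL.

Definition bsup (S : bool -> Prop) : bool :=
  if excluded_middle_informative (S true) then true else false.

Definition Bf : frame.
Proof.
  refine (@Frame bool (fun a b => a = true -> b = true) andb true bsup _ _ _ _ _ _ _).
  - auto.
  - auto.
  - intros [] [] H1 H2; auto; symmetry; auto.
  - intros x [] []; destruct x; simpl; intuition congruence.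
  - auto.
  - intros S x; unfold bsup; destruct excluded_middle_informative as [h|h]; split.
    + intros H [] Hs; auto; intros; discriminate.
    + intros H _; apply (H true h); reflexivity.
    + intros _ [] Hs; [contradiction|intros; discriminate].
    + intros; discriminate.
  - intros a S H; simpl in H; unfold bsup in *.
    destruct a; [|discriminate]. simpl in H.
    destruct (excluded_middle_informative (S true)) as [h'|h']; [|discriminate].
    destruct excluded_middle_informative as [h|h]; auto.
    exfalso; apply h; exists true; auto.
Defined.

Lemma point_of_hom (L : frame) (p : L -> Bf) : frame_hom p -> is_point (L:=L) p.
Proof.
  intros [Ht [Hm Hs]]; split; [exact Ht|split; [exact Hm|]].
  intros S; rewrite Hs; simpl; unfold bsup.
  destruct excluded_middle_informative as [[x [Sx E]]|h]; split; intros H; auto.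
  - exists x; auto.
  - discriminate.
  - exfalso; destruct H as [s [Ss E]]; apply h; exists s; auto.
Qed.

Section Main.
Variables (T : monad) (F : frame) (g : T bool -> F).

Fixpoint meetl (l : list (T bool)) : F :=
  match l with nil => ftop | b :: l' => fmeet (g b) (meetl l') end.

Lemma meetl_app l1 l2 : meetl (l1 ++ l2) = fmeet (meetl l1) (meetl l2).
Proof.
  induction l1 as [|b l1 IH]; simpl.
  - symmetry; apply meet_top.
  - rewrite IH, meet_assoc; reflexivity.
Qed.

Definition basics (x : F) : F -> Prop := fun d => (exists l, d = meetl l) /\ fle d x.
Definition Good (x : F) : Prop := fle x (fsup (basics x)).

Lemma good_top : Good ftop.
Proof. apply le_sup; split; [exists nil; reflexivity|apply fle_refl]. Qed.

Lemma good_gen b : Good (g b).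
Proof.
  unfold Good. eapply fle_trans; [|apply le_sup; split; [exists (b :: nil); reflexivity|]].
  - simpl; apply le_meet; [apply fle_refl|apply ftop_spec].
  - simpl; apply ml.
Qed.

Lemma good_meet x y : Good x -> Good y -> Good (fmeet x y).
Proof.
  unfold Good; intros Hx Hy.
  eapply fle_trans; [apply meet_mono; [exact Hx|exact Hy]|].
  rewrite meet_sup'. apply sup_le; intros z [e [[[le ->] Hle] ->]].
  rewrite meet_comm, meet_sup'. apply sup_le; intros z [d [[[ld ->] Hld] ->]].
  apply le_sup; split.
  - exists (le ++ ld); rewrite meetl_app; reflexivity.
  - rewrite meet_comm; apply meet_mono; auto.
Qed.

Lemma good_sup (S : F -> Prop) : (forall s, S s -> Good s) -> Good (fsup S).
Proof.
  unfold Good; intros H. apply sup_le; intros s Hs.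
  eapply fle_trans; [apply H, Hs|]. apply sup_le; intros d [Hd Hds].
  apply le_sup; split; auto. eapply fle_trans; [exact Hds|apply le_sup; auto].
Qed.

Definition Gcar := {x : F | Good x}.
Definition Gmeet (x y : Gcar) : Gcar :=
  exist _ _ (good_meet (proj2_sig x) (proj2_sig y)).
Definition Gtop : Gcar := exist _ _ good_top.
Lemma good_sup' (S : Gcar -> Prop) : Good (fsup (fun y => exists s, S s /\ y = proj1_sig s)).
Proof. apply good_sup; intros y [s [_ ->]]; apply proj2_sig. Qed.
Definition Gsup (S : Gcar -> Prop) : Gcar := exist _ _ (good_sup' S).

Lemma G_eq (x y : Gcar) : proj1_sig x = proj1_sig y -> x = y.
Proof.
  destruct x as [x Hx], y as [y Hy]; simpl; intros ->; f_equal; apply proof_irrelevance.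
Qed.

Definition Gf : frame.
Proof.
  refine (@Frame Gcar (fun x y => fle (proj1_sig x) (proj1_sig y)) Gmeet Gtop Gsup _ _ _ _ _ _ _).
  - intros; apply fle_refl.
  - intros x y z; apply fle_trans.
  - intros x y H1 H2; apply G_eq, fle_antisym; auto.
  - intros x a b; simpl; apply fmeet_spec.
  - intros; apply ftop_spec.
  - intros S x; simpl; split.
    + intros H s Hs; eapply fle_trans; [|exact H]. apply le_sup; eauto.
    + intros H; apply sup_le; intros y [s [Hs ->]]; auto.
  - intros a S; simpl. rewrite meet_sup'. apply sup_le; intros y [s [[s' [Hs' ->]] ->]].
    apply le_sup. exists (Gmeet a s'); split; [eauto|reflexivity].
Defined.

Definition gG (b : T bool) : Gf := exist _ _ (good_gen b).

Lemma relG : LB0_relations g -> LB0_relations gG.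
Proof.
  intros [R1 [R2 R3]]; split; [|split].
  - intros A t a a' H; apply G_eq; simpl. rewrite R1 by exact H.
    unfold fbot; apply sup_ext'; intros x; split; [intros []|intros [s [[] _]]].
  - intros A B t a; apply G_eq; simpl; apply R2.
  - intros A B t u b; apply G_eq; simpl. rewrite R3. apply sup_ext'; intros x; split.
    + intros [a ->]. exists (Gmeet (gG (mapsto t a)) (gG (mapsto (seqm t (u a)) b))).
      split; [exists a; reflexivity|reflexivity].
    + intros [s [[a ->] ->]]; exists a; reflexivity.
Qed.

Lemma all_good : is_LB0 g -> forall x, Good x.
Proof.
  intros [Hr Hu] x.
  destruct (Hu Gf gG (relG Hr)) as [phi [[P1 [P2 P3]] [Pg _]]].
  destruct (Hu F g Hr) as [phi0 [_ [_ Huniq]]].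
  assert (E1 : forall x, x = phi0 x).
  { apply Huniq; [|reflexivity]. split; [reflexivity|split; [reflexivity|]].
    intros S; apply sup_ext'; intros y; split; [intros Hy; exists y; auto|intros [z [Hz ->]]; auto]. }
  assert (E2 : forall x, proj1_sig (phi x) = phi0 x).
  { apply Huniq.
    - split; [rewrite P1; reflexivity|split].
      + intros a b; rewrite P2; reflexivity.
      + intros S; rewrite P3; simpl; apply sup_ext'; intros y; split.
        * intros [s [[z [Hz ->]] ->]]; eauto.
        * intros [z [Hz ->]]; exists (phi z); eauto.
    - intros b; rewrite Pg; reflexivity. }
  rewrite E1, <- E2; apply proj2_sig.
Qed.
End Main.

Section Filters.
Variable F : frame.

Definition Filt (A : F -> Prop) :=
  (forall x y, A x -> fle x y -> A y) /\ (forall x y, A x -> A y -> A (fmeet x y)).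

Lemma max_filter (c v : F) : ~ fle c v ->
  exists A, Filt A /\ A c /\ ~ A v /\ (forall x y, A (fjoin x y) -> A x \/ A y).
Proof.
  intros ncv.
  set (P := fun X : F -> Prop => (forall x, ~ X x) \/ (Filt X /\ X c /\ ~ X v)).
  assert (Pcase : forall X x, P X -> X x -> Filt X /\ X c /\ ~ X v).
  { intros X x [H|H] Hx; [exfalso; eapply H; eauto|exact H]. }
  destruct (ZornW.my_zorn _ P) as [A [PA Amax]].
  - intros C HC Htot.
    destruct (classic (exists X x, C X /\ X x)) as [[X0 [x0 [CX0 X0x0]]]|Hn].
    + right. destruct (Pcase X0 x0 (HC X0 CX0) X0x0) as [_ [Hc _]].
      split; [split|split].
      * intros x y [X CX Xx] Hle. exists X; auto.
        destruct (Pcase X x (HC X CX) Xx) as [[Hu _] _]; eauto.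
      * intros x y [X CX Xx] [Y CY Yy].
        destruct (Htot X Y CX CY) as [XY|YX].
        -- exists Y; auto. destruct (Pcase Y y (HC Y CY) Yy) as [[_ Hm] _]; auto.
        -- exists X; auto. destruct (Pcase X x (HC X CX) Xx) as [[_ Hm] _]; auto.
      * exists X0; auto.
      * intros [X CX Xv]. destruct (Pcase X v (HC X CX) Xv) as [_ [_ H]]; auto.
    + left. intros x [X CX Xx]; apply Hn; eauto.
  - exists A. destruct PA as [Hemp|[HF [Hc Hv]]].
    + exfalso. assert (PB : P (fun x => fle c x)).
      { right; split; [split|split; [apply fle_refl|exact ncv]].
        - intros x y H1 H2; eapply fle_trans; eauto.
        - intros x y H1 H2; apply le_meet; auto. }
      apply (Hemp c). apply (Amax _ (fun x h => False_ind _ (Hemp x h)) PB c), fle_refl.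
    + split; [exact HF|split; [exact Hc|split; [exact Hv|]]].
      destruct HF as [Hup Hmeet].
      assert (Htop : A ftop) by (apply (Hup c); auto; apply ftop_spec).
      assert (Key : forall w, ~ A w -> exists f, A f /\ fle (fmeet f w) v).
      { intros w nw. apply NNPP; intros Hno. apply nw.
        set (B := fun z => exists f, A f /\ fle (fmeet f w) z).
        assert (PB : P B).
        { right; split; [split|split].
          - intros x y [f [Af Hf]] Hle; exists f; split; auto; eapply fle_trans; eauto.
          - intros x y [f1 [Af1 H1]] [f2 [Af2 H2]]; exists (fmeet f1 f2); split; auto.
            apply le_meet.
            + eapply fle_trans; [|exact H1]. apply meet_mono; [apply ml|apply fle_refl].
            + eapply fle_trans; [|exact H2]. apply meet_mono; [apply mr|apply fle_refl].
          - exists c; split; auto; apply ml.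
          - intros [f [Af Hf]]; apply Hno; eauto. }
        apply (Amax B); auto.
        - intros a Aa; exists a; split; auto; apply ml.
        - exists ftop; split; auto; apply mr. }
      intros x y Hj. apply NNPP; intros Hn. apply not_or_and in Hn as [nx ny].
      destruct (Key x nx) as [f1 [A1 H1]], (Key y ny) as [f2 [A2 H2]].
      apply Hv. apply (Hup (fmeet (fmeet f1 f2) (fjoin x y))); auto.
      unfold fjoin; rewrite meet_sup'. apply sup_le; intros z [s [[-> | ->] ->]].
      * eapply fle_trans; [|exact H1]. apply meet_mono; [apply ml|apply fle_refl].
      * eapply fle_trans; [|exact H2]. apply meet_mono; [apply mr|apply fle_refl].
Qed.

Lemma fin_prime (A : F -> Prop) v : Filt A -> ~ A v ->
  (forall x y, A (fjoin x y) -> A x \/ A y) ->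
  forall n (e : nat -> F), A (fsup (fun z => exists i, i < n /\ z = e i)) ->
  exists i, i < n /\ A (e i).
Proof.
  intros [Hup Hm] Hv Hp n; induction n as [|n IH]; intros e H.
  - exfalso; apply Hv; apply (Hup _ _ H). apply sup_le; intros z [i [Hi _]]; inversion Hi.
  - assert (H' : A (fjoin (fsup (fun z => exists i, i < n /\ z = e i)) (e n))).
    { apply (Hup _ _ H). apply sup_le; intros z [i [Hi ->]].
      destruct (Nat.eq_dec i n) as [->|Hne].
      - apply le_sup; auto.
      - eapply fle_trans; [|apply le_sup; left; reflexivity].
        apply le_sup; exists i; split; auto; lia. }
    destruct (Hp _ _ H') as [H1|H1].
    + destruct (IH e H1) as [i [Hi Ai]]; exists i; split; auto.
    + exists n; split; auto.
Qed.
End Filters.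

Section Pt.
Variables (T : monad) (F : frame) (g : T bool -> F).
Hypothesis Hfin : finitary T.
Hypothesis HL : is_LB0 g.

Lemma hA_rel (A : F -> Prop) v : Filt A -> ~ A v -> A ftop ->
  (forall x y, A (fjoin x y) -> A x \/ A y) ->
  LB0_relations (L:=Bf) (fun b => if excluded_middle_informative (A (g b)) then true else false).
Proof.
  intros HF Hv Htop Hp. destruct HL as [[R1 [R2 R3]] _].
  pose proof HF as [Hup Hm].
  split; [|split].
  - intros A0 t a a' Hne. unfold fbot; simpl; unfold bsup.
    destruct (excluded_middle_informative False) as [[]|_].
    destruct (excluded_middle_informative (A (g (mapsto t a)))) as [h1|h1]; [|reflexivity].
    destruct (excluded_middle_informative (A (g (mapsto t a')))) as [h2|h2]; [|reflexivity].
    exfalso; apply Hv. apply (Hup (fbot F)); [|apply bot_le].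
    rewrite <- (R1 _ t a a' Hne); auto.
  - intros A0 B t a; simpl. rewrite R2.
    destruct excluded_middle_informative; [reflexivity|contradiction].
  - intros A0 B t u b; simpl; unfold bsup.
    destruct (excluded_middle_informative (A (g (mapsto (bind t u) b)))) as [E1|E1];
    destruct excluded_middle_informative as [[a Ha]|nh]; auto.
    + exfalso. apply nh.
      destruct (Hfin t) as [n [t' [f Ht]]].
      assert (Eb : bind t u = bind t' (fun i => u (f i))).
      { rewrite Ht, bind_assoc; f_equal; apply functional_extensionality; intros i; apply bind_ret_l. }
      assert (Es : forall C (s : T C), seqm t s = seqm t' s).
      { intros C s; unfold seqm; rewrite Ht, bind_assoc; f_equal;
        apply functional_extensionality; intros i; apply bind_ret_l. }
      rewrite Eb, R3 in E1.
      set (e := fun k => match lt_dec k n with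
                 | left h => fmeet (g (mapsto t' (exist _ k h)))
                                   (g (mapsto (seqm t' (u (f (exist _ k h)))) b))
                 | right _ => fbot F end).
      assert (E2 : A (fsup (fun z => exists i, i < n /\ z = e i))).
      { apply (Hup _ _ E1). apply sup_le; intros z [[k h] ->].
        apply le_sup; exists k; split; auto. unfold e.
        destruct (lt_dec k n) as [h'|h']; [|contradiction].
        rewrite (proof_irrelevance _ h' h); reflexivity. }
      destruct (fin_prime HF Hv Hp E2) as [k [hk Ak]].
      unfold e in Ak; destruct (lt_dec k n) as [h|h]; [|contradiction].
      set (i := exist (fun k => k < n) k h) in *.
      exists (f i).
      assert (A1 : A (g (mapsto t' i))) by (apply (Hup _ _ Ak), ml).
      assert (A2 : A (g (mapsto (seqm t' (u (f i))) b))) by (apply (Hup _ _ Ak), mr).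
      assert (A3 : A (g (mapsto t (f i)))).
      { apply (Hup _ _ A1). rewrite Ht, R3.
        eapply fle_trans; [|apply le_sup; exists i; reflexivity].
        cbv beta. rewrite R2. apply le_meet; [apply fle_refl|apply ftop_spec]. }
      rewrite Es.
      destruct excluded_middle_informative; [|contradiction].
      destruct excluded_middle_informative; [|contradiction]. reflexivity.
    + exfalso. apply E1.
      destruct (excluded_middle_informative (A (g (mapsto t a)))) as [h1|h1]; [|discriminate].
      destruct (excluded_middle_informative (A (g (mapsto (seqm t (u a)) b)))) as [h2|h2];
        [|discriminate].
      apply (Hup _ _ (Hm _ _ h1 h2)). rewrite R3. apply le_sup; eauto.
Qed.

Lemma pmono (p : F -> bool) x y : is_point p -> fle x y -> p x = true -> p y = true.
Proof.
  intros [_ [Hm _]] Hle Hx. rewrite <- (le_meet_eq Hle), Hm in Hx.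
  apply andb_prop in Hx; apply Hx.
Qed.

Lemma key (u v : F) : (forall p, is_point p -> p u = true -> p v = true) -> fle u v.
Proof.
  intros Hp. apply NNPP; intros nuv.
  pose proof (all_good HL u) as Gu. pose proof (all_good HL v) as Gv.
  assert (Ex : exists l, fle (meetl g l) u /\ ~ fle (meetl g l) v).
  { apply NNPP; intros H. apply nuv. eapply fle_trans; [exact Gu|].
    apply sup_le; intros d [[l ->] Hd]. apply NNPP; intros Hnd. apply H; eauto. }
  destruct Ex as [l [Hlu Hlv]].
  destruct (max_filter Hlv) as [A [HF [Hc [Hv Hpr]]]].
  pose proof HF as [Hup Hm].
  assert (Htop : A ftop) by (apply (Hup _ _ Hc), ftop_spec).
  destruct HL as [_ Hu].
  destruct (Hu Bf _ (hA_rel HF Hv Htop Hpr)) as [p [Hph [Hpg _]]].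
  pose proof (point_of_hom Hph) as Pp.
  assert (P1 : forall l, A (meetl g l) -> p (meetl g l) = true).
  { induction l0 as [|b l0 IH]; simpl; intros H.
    - apply Pp.
    - destruct Pp as [_ [Pm _]]. change (p (fmeet (g b) (meetl g l0)) = true).
      rewrite Pm, Hpg. simpl.
      destruct excluded_middle_informative as [_|n].
      + apply IH. apply (Hup _ _ H), mr.
      + exfalso; apply n, (Hup _ _ H), ml. }
  assert (P2 : forall l, p (meetl g l) = true -> A (meetl g l)).
  { induction l0 as [|b l0 IH]; simpl; intros H; auto.
    destruct Pp as [_ [Pm _]]. change (p (fmeet (g b) (meetl g l0)) = true) in H.
    rewrite Pm, Hpg in H. simpl in H. apply andb_prop in H as [H1 H2].
    destruct excluded_middle_informative as [h|h]; [|discriminate].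
    apply Hm; auto. }
  assert (Hpv : p v = true).
  { apply Hp; auto. apply (pmono Pp Hlu). apply P1, Hc. }
  apply Hv. pose proof (pmono Pp Gv Hpv) as H.
  destruct Pp as [_ [_ Ps]]. apply Ps in H as [s [[[l' ->] Hs] Hps]].
  apply (Hup _ _ (P2 l' Hps)), Hs.
Qed.

Lemma spatialF : spatial F.
Proof.
  intros u v H. apply fle_antisym; apply key; intros p Hp; apply H; auto.
Qed.
End Pt.

Theorem proposition3p18 :
  forall (T : monad), finitary T ->
  forall (F : frame) (g : T bool -> F), is_LB0 g ->
    spatial F /\ spatial (LB1 g).
Proof.
  intros T Hfin F g HL. pose proof (spatialF Hfin HL) as SF. split; [exact SF|].
  intros w w' H. apply LB1_eq. intros m. apply SF. intros p Hp.
  assert (HP : is_point (L:=LB1 g) (fun w0 => p (proj1_sig w0 m))).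
  { destruct Hp as [P1 [P2 P3]]. split; [exact P1|split].
    - intros a b; simpl; apply P2.
    - intros S; simpl. rewrite P3. split.
      + intros [y [[w0 [Sw ->]] Hy]]; eauto.
      + intros [w0 [Sw Hw]]; eauto. }
  exact (H _ HP).
Qed.
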